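(* Let $G$ be a cubic graph with a 3-decomposition, let $u$ be a vertex of $G$ with neighbours $v_1,v_2,v_3$, and let $H$ be obtained from $G$ by deleting $u$, adding a triangle $u_1u_2u_3u_1$ on new vertices, and adding the edges $u_1v_1,u_2v_2,u_3v_3$. Then $H$ has a 3-decomposition.
   Context: All graphs are finite and simple; cubic means 3-regular. A 3-decomposition of a graph is a partition of its edge set into the edge sets of a spanning tree, a (possibly empty) 2-regular subgraph, and a (possibly empty) matching. *)

(* Defs.v *)
From mathcomp Require Import all_boot.
Set Implicit Arguments. Unset Strict Implicit. Unset Printing Implicit Defensive.

Definition simple_graph (T : finType) (e : rel T) : Prop :=
  symmetric e /\ irreflexive e.

Definition edges (T : finType) (e : rel T) : {set {set T}} :=
  [set [set x; y] | x in T, y in T & e x y].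

Definition cubic (T : finType) (e : rel T) : Prop :=
  forall x : T, #|[set y | e x y]| = 3.

Definition sdeg (T : finType) (S : {set {set T}}) (x : T) : nat :=
  #|[set y | [set x; y] \in S]|.

Definition sadj (T : finType) (S : {set {set T}}) : rel T :=
  fun x y => [set x; y] \in S.

Definition has_cycle (T : finType) (S : {set {set T}}) : Prop :=
  exists s : seq T, [/\ 3 <= size s, uniq s & cycle (sadj S) s].

Definition spanning_tree (T : finType) (e : rel T) (S : {set {set T}}) : Prop :=
  [/\ S \subset edges e,
      (forall x y : T, connect (sadj S) x y) & ~ has_cycle S].

Definition two_regular_sub (T : finType) (e : rel T) (S : {set {set T}}) : Prop :=
  S \subset edges e /\ forall x : T, sdeg S x = 0 \/ sdeg S x = 2.

Definition matching (T : finType) (e : rel T) (S : {set {set T}}) : Prop :=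
  S \subset edges e /\ forall x : T, sdeg S x <= 1.

Definition three_decomposition (T : finType) (e : rel T) : Prop :=
  exists F C M : {set {set T}},
    [/\ spanning_tree e F, two_regular_sub e C, matching e M,
        F :|: C :|: M = edges e &
        [/\ [disjoint F & C], [disjoint F & M] & [disjoint C & M]]].

(* The graph H: delete u, add triangle on new vertices inr 0, inr 1, inr 2,
   and join inr i to v i. *)
Definition Hvert (V : finType) (u : V) : finType :=
  ({x : V | x != u} + 'I_3)%type.

Definition Hrel (V : finType) (e : rel V) (u : V) (v : 'I_3 -> V)
  : rel (Hvert u) :=
  fun a b =>
    match a, b with
    | inl x, inl y => e (val x) (val y)
    | inr i, inr j => i != j
    | inl x, inr j => val x == v j
    | inr i, inl y => val y == v i
    end.
Arguments Hrel {V} e u v.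

(* Main.v *)
Require Import Defs.
From mathcomp Require Import all_boot.
Set Implicit Arguments. Unset Strict Implicit. Unset Printing Implicit Defensive.

Lemma set2_eqP (T : finType) (a b c d : T) :
  [set a; b] = [set c; d] -> (a = c /\ b = d) \/ (a = d /\ b = c).
Proof.
move=> E.
have ha : a \in [set c; d] by rewrite -E !inE eqxx.
have hb : b \in [set c; d] by rewrite -E !inE eqxx orbT.
have hc : c \in [set a; b] by rewrite E !inE eqxx.
have hd : d \in [set a; b] by rewrite E !inE eqxx orbT.
move: ha hb hc hd; rewrite !inE.
case/orP=>/eqP ha; case/orP=>/eqP hb; subst; try by auto.
- by case/orP=>/eqP hc; case/orP=>/eqP hd; subst; auto.
- by case/orP=>/eqP hc; case/orP=>/eqP hd; subst; auto.
Qed.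

Lemma mem_edges (T : finType) (r : rel T) : symmetric r ->
  forall x y, ([set x; y] \in edges r) = r x y.
Proof.
move=> sr x y; apply/imset2P/idP.
  case=> a b _; rewrite inE => /andP[_ rab] /set2_eqP [[-> ->]|[-> ->]] //.
  by rewrite sr.
by move=> rxy; exists x y => //; rewrite inE rxy.
Qed.

Lemma edgesP (T : finType) (r : rel T) A :
  reflect (exists x y, r x y /\ A = [set x; y]) (A \in edges r).
Proof.
apply: (iffP idP).
  by case/imset2P=> a b _; rewrite inE => /andP[_ rab] ->; exists a, b.
by case=> x [y [rxy ->]]; apply/imset2P; exists x y => //; rewrite inE rxy.
Qed.

Lemma edges_sub (T : finType) (r r' : rel T) :
  subrel r r' -> edges r \subset edges r'.
Proof.
move=> H; apply/subsetP => A /edgesP [x [y [rxy ->]]].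
by apply/edgesP; exists x, y; split => //; apply: H.
Qed.

Lemma sub_edge (T : finType) (e : rel T) (S : {set {set T}}) x y :
  symmetric e -> S \subset edges e -> [set x; y] \in S -> e x y.
Proof. by move=> se /subsetP sS /sS; rewrite mem_edges. Qed.

Lemma tree_bridge (T : finType) (e : rel T) (F : {set {set T}}) x y :
  simple_graph e -> spanning_tree e F -> [set x; y] \in F ->
  ~~ connect (sadj (F :\ [set x; y])) x y.
Proof.
move=> [se ie] [sF _ nc] xyF; apply/negP => /connectP [p pth lst].
have exy : e x y by apply: (sub_edge se sF xyF).
have nxy : x != y by apply: contraTneq exy => ->; rewrite ie.
have yF : [set last x p; x] \in F by rewrite -lst setUC.
have ny : ~~ sadj (F :\ [set x; y]) x (last x p) by rewrite -lst /sadj in_setD1 eqxx.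
have sD : subrel (sadj (F :\ [set x; y])) (sadj F) by move=> a b; rewrite /sadj in_setD1 => /andP[].
move: (F :\ [set x; y]) pth ny sD => D pth ny sD.
move: nxy yF ny; rewrite lst.
case: (shortenP pth) => p' pth' uq _ nxy yF ny.
apply: nc; exists (x :: p'); split => //.
- case: p' pth' uq nxy yF ny => [|z [|w q]] //=.
  + by rewrite eqxx.
  + by move=> /andP[h _] _ _ _; rewrite h.
- rewrite /= rcons_path; apply/andP; split => //.
  by apply: sub_path pth'.
Qed.

Definition cut (T : finType) (S : {set {set T}}) a b :=
  exists2 X : {set T}, (a \in X) && (b \notin X) &
    forall x y, x \in X -> [set x; y] \in S -> [set x; y] != [set a; b] -> y \in X.

Lemma cut_sym (T : finType) (S : {set {set T}}) a b : cut S a b -> cut S b a.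
Proof.
case=> X /andP[aX bX] cl; exists (~: X); first by rewrite !inE aX bX.
move=> x y; rewrite !inE => xX yS ne; apply: contra xX => yX.
apply: (cl y x yX); first by rewrite setUC.
by rewrite setUC [[set a; b]]setUC.
Qed.

Lemma cut_acyclic (T : finType) (S : {set {set T}}) :
  (forall a b, [set a; b] \in S -> cut S a b) -> ~ has_cycle S.
Proof.
move=> H [[|a [|b q]] [//= sz uq cy]].
case: q sz uq cy => [//|c q] _ uq.
rewrite /cycle rcons_path /= => /andP[abS] /andP[pth lst].
case: (H a b abS) => X /andP[aX bX] cl.
pose r x y := sadj S x y && ([set x; y] != [set a; b]).
have wk : forall p x, path r x p -> x \notin X -> last x p \notin X.
  elim=> [//|y p IH] x /= /andP[/andP[xyS ne] pth'] xX; apply: IH => //.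
  apply: contra xX => yX; apply: (cl y x yX); first by rewrite /sadj setUC in xyS.
  by rewrite setUC.
move: uq; rewrite /= !inE !negb_or => /andP[/andP[nab /andP[nac naq]]] /andP[/andP[nbc nbq] _].
have P1 : path r b (rcons (c :: q) a).
  rewrite rcons_path; apply/andP; split.
    apply: (@sub_in_path _ (predC1 a) (sadj S)).
    - move=> x y; rewrite !inE => xa ya sxy; rewrite /r sxy /=.
      apply/negP => /eqP E; have : a \in [set x; y] by rewrite E !inE eqxx.
      by rewrite !inE ![a == _]eq_sym (negbTE xa) (negbTE ya).
    - rewrite /= eq_sym nab eq_sym nac /=; apply/allP => z zq /=; apply: contraNneq naq => <-. done. 
    - by rewrite /= pth.
  rewrite /r lst /=; apply/negP => /eqP /set2_eqP [[E _]|[E _]].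
  - have : last c q \in c :: q by apply: mem_last.
    by rewrite E inE (negbTE naq) orbF (negbTE nac).
  - have : last c q \in c :: q by apply: mem_last.
    by rewrite E inE (negbTE nbq) orbF (negbTE nbc).
have := wk _ _ P1 bX; rewrite last_rcons.
by rewrite aX.
Qed.

Definition phi (V : finType) (u : V) (a : Hvert u) : V :=
  match a with inl x => val x | inr _ => u end.
Arguments phi {V u} a.

Definition Lrel (V : finType) (u : V) (v : 'I_3 -> V) (S : {set {set V}})
  (t : rel 'I_3) : rel (Hvert u) :=
  fun a b =>
    match a, b with
    | inl x, inl y => [set val x; val y] \in S
    | inr i, inr j => t i j
    | inl x, inr j => (val x == v j) && ([set u; v j] \in S)
    | inr i, inl y => (val y == v i) && ([set u; v i] \in S)
    end.
Arguments Lrel {V} u v S t.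

Definition hlift (V : finType) (u : V) (v : 'I_3 -> V) (S : {set {set V}})
  (t : rel 'I_3) := edges (Lrel u v S t).
Arguments hlift {V} u v S t.

Lemma Lrel_sym (V : finType) (u : V) (v : 'I_3 -> V) (S : {set {set V}}) (t : rel 'I_3) :
  symmetric t -> symmetric (Lrel u v S t).
Proof. by move=> st [x|i] [y|j] //=; rewrite setUC. Qed.

Lemma mem_lift (V : finType) (u : V) (v : 'I_3 -> V) (S : {set {set V}}) (t : rel 'I_3) a b :
  symmetric t -> ([set a; b] \in hlift u v S t) = Lrel u v S t a b.
Proof. by move=> st; rewrite mem_edges //; apply: Lrel_sym. Qed.

Lemma lift_sub (V : finType) (e : rel V) (u : V) (v : 'I_3 -> V) (S : {set {set V}}) (t : rel 'I_3) :
  symmetric e -> S \subset edges e -> (forall i j, t i j -> i != j) ->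
  hlift u v S t \subset edges (Hrel e u v).
Proof.
move=> se sS tn; apply: edges_sub => [[x|i] [y|j]] /=.
- by move/(sub_edge se sS).
- by case/andP.
- by case/andP=> ->.
- exact: tn.
Qed.

Lemma phi_edge (V : finType) (u : V) (v : 'I_3 -> V) (S : {set {set V}}) (t : rel 'I_3) a b :
  Lrel u v S t a b -> phi a != phi b -> [set phi a; phi b] \in S.
Proof.
case: a b => [x|i] [y|j] //=; first by case/andP=> /eqP-> ; rewrite setUC.
- by case/andP=> /eqP->.
- by rewrite eqxx.
Qed.

Lemma phi_inl (V : finType) (u : V) (x : {x : V | x != u}) : phi (inl x : Hvert u) != u.
Proof. exact: (valP x). Qed.

Lemma svalN (V : finType) (u : V) (x : {x : V | x != u}) : sval x != u.
Proof. exact: (valP x). Qed.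

Lemma phi_inj (V : finType) (u : V) (v : 'I_3 -> V) (S : {set {set V}}) (t : rel 'I_3) a b c d :
  injective v -> Lrel u v S t a b -> Lrel u v S t c d -> phi a != phi b ->
  phi a = phi c -> phi b = phi d -> a = c.
Proof.
move=> iv; case: a b c d => [x|i] [y|j] [z|k] [w|l] //=;
  try by move=> _ _ _ /val_inj ->.
all: move=> h1 h2 h3 E1 E2.
all: first [ by move: (svalN x); rewrite E1 eqxx | by move: (svalN z); rewrite -E1 eqxx
           | by move: (svalN y); rewrite E2 eqxx | by rewrite eqxx in h3 | idtac ].
case/andP: h1 => /eqP yi _; case/andP: h2 => /eqP wk _.
by rewrite (iv i k) // -yi -wk E2.
Qed.

Lemma nbr (V : finType) (e : rel V) (u : V) (v : 'I_3 -> V) y :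
  cubic e -> injective v -> (forall i, e u (v i)) -> e u y -> exists i, y = v i.
Proof.
move=> cb iv euv euy.
have E : v @: setT = [set y | e u y].
  apply/eqP; rewrite eqEcard cb card_imset // cardsT card_ord leqnn andbT.
  by apply/subsetP => z /imsetP [i _ ->]; rewrite inE.
have : y \in [set y | e u y] by rewrite inE.
by rewrite -E => /imsetP [i _ ->]; exists i.
Qed.

Definition star (k : 'I_3) : rel 'I_3 := fun i j => (i != j) && ((i == k) || (j == k)).
Definition opp (k : 'I_3) : rel 'I_3 := fun i j => [&& i != j, i != k & j != k].
Definition rel0 : rel 'I_3 := fun _ _ => false.

Lemma star_sym k : symmetric (star k).
Proof. by move=> i j; rewrite /star eq_sym orbC. Qed.
Lemma opp_sym k : symmetric (opp k).
Proof. by move=> i j; rewrite /opp [j == i]eq_sym; case: (i == j); case: (i == k); case: (j == k). Qed.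
Lemma rel0_sym : symmetric rel0.
Proof. by []. Qed.

Lemma sadj_sym (T : finType) (S : {set {set T}}) : symmetric (sadj S).
Proof. by move=> a b; rewrite /sadj setUC. Qed.

Lemma lift_connect (V : finType) (e : rel V) (u : V) (v : 'I_3 -> V) (F : {set {set V}}) k :
  simple_graph e -> cubic e -> injective v -> (forall i, e u (v i)) ->
  F \subset edges e -> (forall x y, connect (sadj F) x y) ->
  forall a b : Hvert u, connect (sadj (hlift u v F (star k))) a b.
Proof.
move=> [se ie] cb iv euv sF cF.
have sF' : forall a b, sadj (hlift u v F (star k)) a b = Lrel u v F (star k) a b.
  by move=> a b; rewrite /sadj mem_lift //; apply: star_sym.
have csym := sym_connect_sym (sadj_sym (hlift u v F (star k))).
have star_conn : forall i j, connect (sadj (hlift u v F (star k))) (inr i) (inr j).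
  have h : forall i, connect (sadj (hlift u v F (star k))) (inr i) (inr k).
    move=> i; case: (eqVneq i k) => [->|ik]; first exact: connect0.
    by apply: connect1; rewrite sF' /= /star ik eqxx orbT.
  by move=> i j; apply: connect_trans (h i) _; rewrite csym.
have same_phi : forall a b, phi a = phi b -> connect (sadj (hlift u v F (star k))) a b.
  case=> [x|i] [y|j] /= E.
  - by rewrite (val_inj E); apply: connect0.
  - by move: (svalN x); rewrite E eqxx.
  - by move: (svalN y); rewrite -E eqxx.
  - exact: star_conn.
have stepl : forall x j, [set sval x; u] \in F ->
    connect (sadj (hlift u v F (star k))) (inl x) (inr j).
  move=> x j xuF.
  have : e u (sval x) by rewrite se; apply: (sub_edge se sF xuF).
  case/(nbr cb iv euv) => i xi.
  apply: connect_trans (star_conn i j).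
  by apply: connect1; rewrite sF' /= xi eqxx setUC -xi.
have step : forall a b, sadj F (phi a) (phi b) -> connect (sadj (hlift u v F (star k))) a b.
  case=> [x|i] [y|j] /= h.
  - by apply: connect1; rewrite sF'.
  - exact: stepl.
  - by rewrite csym; apply: stepl; rewrite /sadj setUC in h.
  - exact: star_conn.
have surj : forall w, exists a : Hvert u, phi a = w.
  move=> w; case: (eqVneq w u) => [->|wu]; first by exists (inr ord0).
  by exists (inl (exist _ w wu)).
move=> a b; have /connectP [p pth lst] := cF (phi a) (phi b).
elim: p a pth lst => [|z p IH] a /= pth lst; first exact: same_phi.
case/andP: pth => h pth; have [c cz] := surj z.
apply: connect_trans (step a c _) (IH c _ _); rewrite ?cz //.
Qed.

Lemma vneq (V : finType) (e : rel V) (u : V) (v : 'I_3 -> V) i :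
  irreflexive e -> e u (v i) -> v i != u.
Proof. by move=> ie h; apply: contraTneq h => ->; rewrite ie. Qed.

Lemma cut_phi (V : finType) (e : rel V) (u : V) (v : 'I_3 -> V) (F : {set {set V}}) (t : rel 'I_3) a b :
  simple_graph e -> injective v -> symmetric t -> spanning_tree e F ->
  Lrel u v F t a b -> phi a != phi b -> cut (hlift u v F t) a b.
Proof.
move=> sg iv st tF Lab ne.
have abF := phi_edge Lab ne.
pose X0 := [set w | connect (sadj (F :\ [set phi a; phi b])) (phi a) w].
exists [set z | phi z \in X0].
  by rewrite !inE connect0 /=; apply: tree_bridge sg tF abF.
move=> c d; rewrite !inE mem_lift // => cX Lcd ne'.
case: (eqVneq (phi c) (phi d)) => [<- //|ne2].
apply: connect_trans cX (connect1 _).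
rewrite /sadj in_setD1 (phi_edge Lcd ne2) andbT.
have Lba : Lrel u v F t b a by rewrite Lrel_sym.
have Ldc : Lrel u v F t d c by rewrite Lrel_sym.
have neba : phi b != phi a by rewrite eq_sym.
apply/negP => /eqP /set2_eqP [[E1 E2]|[E1 E2]].
- have ac := phi_inj iv Lab Lcd ne (esym E1) (esym E2).
  have bd := phi_inj iv Lba Ldc neba (esym E2) (esym E1).
  by rewrite ac bd eqxx in ne'.
- have bc := phi_inj iv Lba Lcd neba (esym E1) (esym E2).
  have ad := phi_inj iv Lab Ldc ne (esym E2) (esym E1).
  by rewrite -bc -ad setUC eqxx in ne'.
Qed.

Lemma cut_leaf (V : finType) (e : rel V) (u : V) (v : 'I_3 -> V) (F : {set {set V}}) k i :
  simple_graph e -> injective v -> (forall i, e u (v i)) -> spanning_tree e F ->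
  i != k -> cut (hlift u v F (star k)) (inr i) (inr k).
Proof.
move=> sg iv euv tF ik; have [se ie] := sg.
pose X0 := [set w | ([set u; v i] \in F) && connect (sadj (F :\ [set v i; u])) (v i) w].
exists [set z : Hvert u | match z with inl w => sval w \in X0 | inr j => j == i end].
  by rewrite !inE /= eqxx eq_sym (negbTE ik).
have sk := @star_sym k.
move=> [w|j] [w'|j']; rewrite !inE mem_lift //=.
- case/andP=> uiF cw ww'F ne; rewrite uiF /=.
  apply: connect_trans cw (connect1 _).
  rewrite /sadj in_setD1 ww'F andbT; apply/negP => /eqP E.
  have : u \in [set sval w; sval w'] by rewrite E !inE eqxx orbT.
  by rewrite !inE ![u == _]eq_sym (negbTE (svalN w)) (negbTE (svalN w')).
- case/andP=> uiF cw /andP[/eqP wj ujF] ne.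
  apply/negPn/negP => ji.
  have br : ~~ connect (sadj (F :\ [set v i; u])) (v i) u by apply: tree_bridge sg tF _; rewrite setUC.
  case/negP: br; apply: connect_trans cw (connect1 _).
  rewrite /sadj in_setD1 wj setUC ujF andbT; apply/negP => /eqP /set2_eqP [[E1 E2]|[_ E]].
  + by move: (vneq ie (euv i)); rewrite -E1 eqxx.
  + by rewrite (iv _ _ E) eqxx in ji.
- move=> /eqP -> /andP[/eqP wi ->] _ /=; rewrite wi; exact: connect0.
- move=> /eqP -> /andP[ij /orP[/eqP ik'|/eqP ->]] ne.
  + by rewrite ik' eqxx in ik.
  + by rewrite eqxx in ne.
Qed.

Lemma lift_acyclic (V : finType) (e : rel V) (u : V) (v : 'I_3 -> V) (F : {set {set V}}) k :
  simple_graph e -> injective v -> (forall i, e u (v i)) -> spanning_tree e F ->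
  ~ has_cycle (hlift u v F (star k)).
Proof.
move=> sg iv euv tF; have [se ie] := sg; have [sF _ _] := tF.
apply: cut_acyclic => a b; rewrite mem_lift; last exact: star_sym.
move=> Lab; case: (eqVneq (phi a) (phi b)) => [E|ne]; last first.
  by apply: cut_phi sg iv (@star_sym k) tF Lab ne.
case: a b Lab E => [x|i] [y|j] /= Lab E.
- by move: (sub_edge se sF Lab); rewrite E ie.
- by move: (svalN x); rewrite E eqxx.
- by move: (svalN y); rewrite -E eqxx.
- case/andP: Lab => ij /orP[/eqP ik|/eqP jk].
  + by subst i; apply: cut_sym; apply: (cut_leaf sg iv euv tF); rewrite eq_sym.
  + by subst j; apply: (cut_leaf sg iv euv tF).
Qed.

Lemma sdeg_inl (V : finType) (e : rel V) (u : V) (v : 'I_3 -> V) (S : {set {set V}}) (t : rel 'I_3) x :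
  simple_graph e -> cubic e -> injective v -> (forall i, e u (v i)) ->
  S \subset edges e -> symmetric t ->
  sdeg (hlift u v S t) (inl x) = sdeg S (sval x).
Proof.
move=> [se ie] cb iv euv sS st; rewrite /sdeg.
set NH := [set b | _].
have -> : [set y | [set sval x; y] \in S] = phi @: NH.
  apply/setP => w; rewrite inE; apply/idP/imsetP.
  - move=> xwS; case: (eqVneq w u) => [wu|wu].
    + subst w; have : e u (sval x) by rewrite se; apply: (sub_edge se sS xwS).
      case/(nbr cb iv euv) => i xi.
      by exists (inr i); rewrite // inE mem_lift //= xi eqxx -xi setUC.
    + by exists (inl (exist _ w wu)); rewrite // inE mem_lift.
  - case=> b; rewrite inE mem_lift // => L ->.
    case: b L => [y|j] //= /andP[/eqP -> ]; by rewrite setUC.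
rewrite card_in_imset // => b1 b2; rewrite !inE !mem_lift //.
case: b1 b2 => [y1|j1] [y2|j2] /=.
- by move=> _ _ /val_inj ->.
- by move=> _ _ E; move: (svalN y1); rewrite E eqxx.
- by move=> _ _ E; move: (svalN y2); rewrite -E eqxx.
- by move=> /andP[/eqP E1 _] /andP[/eqP E2 _] _; rewrite (iv j1 j2) // -E1 -E2.
Qed.

Lemma sdeg_inr (V : finType) (u : V) (v : 'I_3 -> V) (S : {set {set V}}) (t : rel 'I_3) i :
  v i != u -> symmetric t ->
  sdeg (hlift u v S t) (inr i) = ([set u; v i] \in S) + \sum_(j | t i j) 1.
Proof.
move=> hv st; rewrite /sdeg -sum1_card big_sumType /=; congr addn; last first.
  by apply: eq_bigl => j; rewrite inE mem_lift.
rewrite (eq_bigl (fun y : {x : V | x != u} => (sval y == v i) && ([set u; v i] \in S))); last first.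
  by move=> y; rewrite inE mem_lift.
case: ([set u; v i] \in S).
- rewrite (big_pred1 (exist _ (v i) hv)) // => y /=.
  by rewrite andbT -val_eqE.
- by rewrite big_pred0 // => y; rewrite andbF.
Qed.

Lemma sdeg_u (V : finType) (e : rel V) (u : V) (v : 'I_3 -> V) (S : {set {set V}}) :
  simple_graph e -> cubic e -> injective v -> (forall i, e u (v i)) ->
  S \subset edges e -> sdeg S u = #|[set i | [set u; v i] \in S]|.
Proof.
move=> [se ie] cb iv euv sS; rewrite /sdeg -(card_imset _ iv).
suff -> : [set y | [set u; y] \in S] = v @: [set i | [set u; v i] \in S] by [].
apply/setP => y; rewrite inE; apply/idP/imsetP.
- move=> uyS; have [i yi] := nbr cb iv euv (sub_edge se sS uyS); subst y.
  by exists i; rewrite // inE.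
- by case=> i; rewrite inE => h ->.
Qed.

Definition o0 : 'I_3 := @Ordinal 3 0 isT.
Definition o1 : 'I_3 := @Ordinal 3 1 isT.
Definition o2 : 'I_3 := @Ordinal 3 2 isT.

Lemma ord3 (i : 'I_3) : i = o0 \/ i = o1 \/ i = o2.
Proof.
case: i => [[|[|[|n]]] h]; [left | right; left | right; right |] ; try by apply: val_inj.
by [].
Qed.

Lemma sum3 (P : pred 'I_3) : \sum_(j | P j) 1 = P o0 + P o1 + P o2.
Proof.
rewrite big_mkcond /= !big_ord_recl big_ord0 addn0 addnA.
have -> : (ord0 : 'I_3) = o0 by apply: val_inj.
have -> : (lift o0 ord0 : 'I_3) = o1 by apply: val_inj.
have -> : (lift o0 (lift ord0 ord0) : 'I_3) = o2 by apply: val_inj.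
by case: (P o0); case: (P o1); case: (P o2).
Qed.

Lemma card3 (P : pred 'I_3) : #|[set j | P j]| = P o0 + P o1 + P o2.
Proof. by rewrite -sum3 -sum1_card; apply: eq_bigl => j; rewrite inE. Qed.

Definition F3 (P : 'I_3 -> bool) := [&& P o0, P o1 & P o2].
Definition E3 (P : 'I_3 -> bool) := [|| P o0, P o1 | P o2].
Definition tf (a b c : bool) (i : 'I_3) := nth false [:: a; b; c] i.
Definition tC (K : bool) k := if K then opp k else rel0.
Definition tM (K : bool) k := if K then rel0 else opp k.
Definition goodb (ci mi : bool) k K i :=
  let sc := ci + (tC K k i o0 + tC K k i o1 + tC K k i o2) in
  ((sc == 0) || (sc == 2)) && (mi + (tM K k i o0 + tM K k i o1 + tM K k i o2) <= 1).

Lemma fin_check (a1 a2 a3 b1 b2 b3 d1 d2 d3 : bool) :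
  [&& (a1 + b1 + d1 == 1), (a2 + b2 + d2 == 1), (a3 + b3 + d3 == 1),
      (b1 + b2 + b3 == 0) || (b1 + b2 + b3 == 2), d1 + d2 + d3 <= 1 & [|| a1, a2 | a3]] ->
  E3 (fun k => F3 (fun i => goodb (tf b1 b2 b3 i) (tf d1 d2 d3 i) k true i) ||
               F3 (fun i => goodb (tf b1 b2 b3 i) (tf d1 d2 d3 i) k false i)).
Proof.
by case: a1; case: a2; case: a3; case: b1; case: b2; case: b3; case: d1; case: d2; case: d3; vm_compute.
Qed.

Lemma E3P P : E3 P -> exists i, P i.
Proof. by case/or3P=> h; eexists; exact: h. Qed.

Lemma F3P P : F3 P -> forall i, P i.
Proof. by case/and3P=> h0 h1 h2 i; case: (ord3 i) => [->|[->|->]]. Qed.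

Lemma tfE (f : 'I_3 -> bool) i : tf (f o0) (f o1) (f o2) i = f i.
Proof. by case: (ord3 i) => [->|[->|->]]. Qed.

Lemma tC_sym K k : symmetric (tC K k).
Proof. case: K; [exact: opp_sym | exact: rel0_sym]. Qed.
Lemma tM_sym K k : symmetric (tM K k).
Proof. case: K; [exact: rel0_sym | exact: opp_sym]. Qed.

Lemma lift_disj (V : finType) (u : V) (v : 'I_3 -> V) (S S' : {set {set V}}) (t t' : rel 'I_3) :
  symmetric t' -> [disjoint S & S'] -> (forall i j, t i j -> t' i j -> False) ->
  [disjoint hlift u v S t & hlift u v S' t'].
Proof.
move=> st' dS dt; rewrite -setI_eq0; apply/eqP/setP => A; rewrite !inE.
apply/negP => /andP[/edgesP [a [b [L ->]]]]; rewrite mem_lift // => L'.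
case: a b L L' => [x|i] [y|j] /=.
- by move=> h; rewrite (disjointFr dS h).
- by case/andP=> _ h; rewrite (disjointFr dS h) andbF.
- by case/andP=> _ h; rewrite (disjointFr dS h) andbF.
- exact: dt.
Qed.

Lemma star_neq k i j : star k i j -> i != j.
Proof. by case/andP. Qed.
Lemma tC_neq K k i j : tC K k i j -> i != j.
Proof. by case: K => //= /and3P[]. Qed.
Lemma tM_neq K k i j : tM K k i j -> i != j.
Proof. by case: K => //= /and3P[]. Qed.

Unset Implicit Arguments.
Set Strict Implicit.

Theorem lemma14 (V : finType) (e : rel V) (u : V) (v : 'I_3 -> V) :
  simple_graph e -> cubic e -> three_decomposition e ->
  injective v -> (forall i, e u (v i)) ->
  three_decomposition (Hrel e u v).
Proof.
move=> sg cbc [F [C [M [tF trC mM U [dFC dFM dCM]]]]] iv euv.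
have [se ie] := sg; have [sF cF _] := tF; have [sC dC] := trC; have [sM dM] := mM.
have hv : forall i, v i != u := fun i => vneq ie (euv i).
pose fb i := [set u; v i] \in F.
pose cb i := [set u; v i] \in C.
pose mb i := [set u; v i] \in M.
have part : forall i, fb i + cb i + mb i == 1.
  move=> i; rewrite /fb /cb /mb.
  have : [set u; v i] \in edges e by rewrite mem_edges.
  rewrite -U !inE.
  case hF: ([set u; v i] \in F); case hC: ([set u; v i] \in C);
    case hM: ([set u; v i] \in M) => //= _.
  all: try by rewrite (disjointFr dFC hF) in hC.
  all: try by rewrite (disjointFr dFM hF) in hM.
  all: try by rewrite (disjointFr dCM hC) in hM.
have hCs : (cb o0 + cb o1 + cb o2 == 0) || (cb o0 + cb o1 + cb o2 == 2).
  by case: (dC u); rewrite (sdeg_u sg cbc iv euv sC) card3 => ->.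
have hMs : mb o0 + mb o1 + mb o2 <= 1.
  by have := dM u; rewrite (sdeg_u sg cbc iv euv sM) card3.
have hFs : [|| fb o0, fb o1 | fb o2].
  have /connectP [p pth lst] := cF u (v o0).
  case: p pth lst => [|z p] /=; first by move=> _ E; move: (hv o0); rewrite E eqxx.
  case/andP => uz _ _; have [i zi] := nbr cbc iv euv (sub_edge se sF uz); subst z.
  by case: (ord3 i) => [E|[E|E]]; subst i; move: uz; rewrite /sadj /fb => ->; rewrite ?orbT.
have := @fin_check (fb o0) (fb o1) (fb o2) (cb o0) (cb o1) (cb o2) (mb o0) (mb o1) (mb o2).
rewrite (part o0) (part o1) (part o2) hCs hMs hFs /= => /(_ isT) /E3P [k hk].
have [K hK] : exists K, F3 (fun i => goodb (tf (cb o0) (cb o1) (cb o2) i) (tf (mb o0) (mb o1) (mb o2) i) k K i).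
  by case/orP: hk => h; [exists true | exists false].
have gd : forall i, goodb (cb i) (mb i) k K i.
  by move=> i; have := F3P hK i; rewrite (tfE cb) (tfE mb).
have sk := @star_sym k; have sc := tC_sym K k; have sm := tM_sym K k.
exists (hlift u v F (star k)), (hlift u v C (tC K k)), (hlift u v M (tM K k)).
split.
- split; first exact: (@lift_sub V e u v F (star k) se sF (@star_neq k)).
  + exact: (@lift_connect V e u v F k sg cbc iv euv sF cF).
  + exact: (@lift_acyclic V e u v F k sg iv euv tF).
- split; first exact: (@lift_sub V e u v C (tC K k) se sC (@tC_neq K k)).
  case=> [x|i]; first by rewrite (@sdeg_inl V e u v C (tC K k) x sg cbc iv euv sC sc).
  rewrite (@sdeg_inr V u v C (tC K k) i (hv i) sc) sum3.
  by have := gd i; rewrite /goodb => /andP[/orP[/eqP -> | /eqP ->] _]; [left|right].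
- split; first exact: (@lift_sub V e u v M (tM K k) se sM (@tM_neq K k)).
  case=> [x|i]; first by rewrite (@sdeg_inl V e u v M (tM K k) x sg cbc iv euv sM sm).
  rewrite (@sdeg_inr V u v M (tM K k) i (hv i) sm) sum3.
  by have := gd i; rewrite /goodb => /andP[_ h].
- apply/setP => A; apply/idP/idP.
  + rewrite !inE => /orP[/orP[h|h]|h].
    * exact: (subsetP (@lift_sub V e u v F (star k) se sF (@star_neq k))).
    * exact: (subsetP (@lift_sub V e u v C (tC K k) se sC (@tC_neq K k))).
    * exact: (subsetP (@lift_sub V e u v M (tM K k) se sM (@tM_neq K k))).
  + case/edgesP => [a [b [hab ->]]]; rewrite !inE !mem_lift //.
    case: a b hab => [x|i] [y|j] /= hab.
    * have : [set sval x; sval y] \in edges e by rewrite mem_edges.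
      by rewrite -U !inE.
    * rewrite hab /=; have : [set u; v j] \in edges e by rewrite mem_edges.
      by rewrite -U !inE.
    * rewrite hab /=; have : [set u; v i] \in edges e by rewrite mem_edges.
      by rewrite -U !inE.
    * by case: K {hK gd sc sm} => /=; rewrite /star /opp /rel0 hab /=;
        case: (i == k); case: (j == k).
- split.
  + apply: lift_disj => // i j; rewrite /star /tC; case: K {hK gd sc sm} => //=.
    by case/andP=> _ /orP[] /eqP -> /and3P[_ /eqP ? /eqP ?].
  + apply: lift_disj => // i j; rewrite /star /tM; case: K {hK gd sc sm} => //=.
    by case/andP=> _ /orP[] /eqP -> /and3P[_ /eqP ? /eqP ?].
  + by apply: lift_disj => // i j; rewrite /tC /tM; case: K {hK gd sc sm}.
Qed.
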